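(* Let $p$ be a prime, let $G$ be a finite abelian $p$-group, and let $\boldsymbol{\alpha}=(\alpha_1,\ldots,\alpha_r)$ be a basis for $G$. Let $j$ and $k$ be nonnegative integers with $j<k$. Then $\boldsymbol{\alpha}(j,k)$ is a basis for $G(j,k)$.
   Context: A vector $\boldsymbol{\gamma}=(\gamma_1,\ldots,\gamma_s)$ of elements of a finite abelian group (trivial entries allowed) is a basis for the group $\langle\boldsymbol{\gamma}\rangle$ it generates if every $\beta\in\langle\boldsymbol{\gamma}\rangle$ can be written uniquely as $\gamma_1^{x_1}\cdots\gamma_s^{x_s}$ with $0\le x_i<|\gamma_i|$. For nonnegative integers $j<k$, $G(j,k)=\{\beta^{p^j}:\beta\in G,\ \beta^{p^k}=1_G\}$. With $n_i=\log_p|\alpha_i|$ and $q_i=p^{\,j+\max(0,n_i-k)}$, set $\mathbf{q}(j,k)=(q_1,\ldots,q_r)$ and $\boldsymbol{\alpha}(j,k)=(\alpha_1^{q_1},\ldots,\alpha_r^{q_r})$. *)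

(* Defs.v *)
From mathcomp Require Import all_boot all_order all_fingroup all_solvable.
Set Implicit Arguments. Unset Strict Implicit. Unset Printing Implicit Defensive.
Local Open Scope group_scope.

Definition is_basis (gT : finGroupType) (s : nat) (gamma : 'I_s -> gT)
    (H : {set gT}) : Prop :=
  <<[set gamma i | i : 'I_s]>> = H /\
  forall beta, beta \in H ->
    exists! x : {ffun 'I_s -> nat},
      (forall i, (x i < #[gamma i])%N) /\ \prod_(i < s) gamma i ^+ x i = beta.

Definition Gjk (gT : finGroupType) (p j k : nat) (G : {set gT}) : {set gT} :=
  [set b ^+ (p ^ j) | b in [set b in G | b ^+ (p ^ k) == 1]].

(* n_i = log_p #[alpha_i];  q_i = p^(j + max(0, n_i - k)) *)
Definition qjk (gT : finGroupType) (p j k : nat) (r : nat) (alpha : 'I_r -> gT)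
    (i : 'I_r) : nat :=
  p ^ (j + (logn p #[alpha i] - k)).

Definition alphajk (gT : finGroupType) (p j k : nat) (r : nat)
    (alpha : 'I_r -> gT) : 'I_r -> gT :=
  fun i => alpha i ^+ qjk p j k alpha i.

(* Main.v *)
Require Import Defs.
From mathcomp Require Import all_boot all_order all_fingroup all_solvable.
From mathcomp Require Import zify.
Local Open Scope group_scope.

Section Aux.
Variable gT : finGroupType.

Lemma prodX_ab (G : {group gT}) (I : Type) (r : seq I) (P : pred I)
    (f : I -> gT) n :
  abelian G -> (forall i, P i -> f i \in G) ->
  (\prod_(i <- r | P i) f i) ^+ n = \prod_(i <- r | P i) f i ^+ n.
Proof.
move=> abG fG; elim: r => [|a r IH]; first by rewrite !big_nil expg1n.
rewrite !big_cons; case: ifP => Pa //.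
rewrite -IH expgMn //.
apply: (centsP abG); first exact: fG.
by apply: group_prod.
Qed.

Lemma basis_mem s (alpha : 'I_s -> gT) (H : {set gT}) (a : 'I_s -> nat) :
  is_basis alpha H -> \prod_(i < s) alpha i ^+ a i \in H.
Proof.
case=> <- _; apply: group_prod => i _.
by apply: groupX; apply: mem_gen; apply: imset_f.
Qed.

Lemma comp_uniq s (alpha : 'I_s -> gT) (H : {set gT}) (a b : 'I_s -> nat) :
  is_basis alpha H ->
  \prod_(i < s) alpha i ^+ a i = \prod_(i < s) alpha i ^+ b i ->
  forall i, alpha i ^+ a i = alpha i ^+ b i.
Proof.
move=> hB e i.
have hm : \prod_(i < s) alpha i ^+ a i \in H by apply: basis_mem hB.
case: (hB) => _ /(_ _ hm) [x [_ Ux]].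
pose fa := [ffun i => a i %% #[alpha i]].
pose fb := [ffun i => b i %% #[alpha i]].
have Pa : (forall i, fa i < #[alpha i]) /\ \prod_(i < s) alpha i ^+ fa i = \prod_(i < s) alpha i ^+ a i.
  split=> [i'|]; first by rewrite ffunE ltn_pmod // order_gt0.
  by apply: eq_bigr => i' _; rewrite ffunE expg_mod_order.
have Pb : (forall i, fb i < #[alpha i]) /\ \prod_(i < s) alpha i ^+ fb i = \prod_(i < s) alpha i ^+ a i.
  split=> [i'|]; first by rewrite ffunE ltn_pmod // order_gt0.
  by rewrite e; apply: eq_bigr => i' _; rewrite ffunE expg_mod_order.
have E := Ux _ Pa; rewrite (Ux _ Pb) in E; have := congr1 (fun f : {ffun 'I_s -> nat} => f i) E.
by rewrite !ffunE -(expg_mod_order _ (a i)) -(expg_mod_order _ (b i)) => ->.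
Qed.

End Aux.
Arguments prodX_ab {gT G I} r P f n.
Arguments comp_uniq {gT s alpha H a b}.

Theorem lemma1 (gT : finGroupType) (p : nat) (G : {group gT}) (r : nat)
    (alpha : 'I_r -> gT) (j k : nat) :
  prime p -> p.-group G -> abelian G ->
  is_basis alpha G -> (j < k)%N ->
  is_basis (alphajk p j k alpha) (Gjk p j k G).
Proof.
move=> pr pG abG hB ltjk.
set gam := alphajk p j k alpha.
have aG : forall i, alpha i \in G.
  by move=> i; case: hB => <- _; apply: mem_gen; apply: imset_f.
have p0 : 0 < p by apply: prime_gt0.
set n := fun i => logn p #[alpha i].
have ordE : forall i, #[alpha i] = (p ^ n i)%N.
  move=> i; rewrite /n -p_part part_pnat_id //.
  exact: (mem_p_elt pG (aG i)).
have gamE : forall i, gam i = alpha i ^+ (p ^ (n i - k))%N ^+ (p ^ j)%N.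
  by move=> i; rewrite /gam /alphajk /qjk -expgM -expnD addnC.
have ex : forall beta, beta \in Gjk p j k G ->
    exists y : 'I_r -> nat, beta = \prod_(i < r) gam i ^+ y i.
  move=> beta /imsetP [b]; rewrite inE => /andP [bG /eqP bk] ->.
  case: (hB) => _ /(_ _ bG) [x [[xlt xb] _]].
  have hk : \prod_(i < r) alpha i ^+ (x i * p ^ k)%N = \prod_(i < r) alpha i ^+ 0.
    rewrite [RHS]big1; last by move=> i _; rewrite expg0.
    rewrite -[RHS]bk -xb (prodX_ab _ _ _ _ abG); last by move=> i _; apply: groupX.
    by apply: eq_bigr => i _; rewrite expgM.
  have dv : forall i, (p ^ (n i - k) %| x i)%N.
    move=> i; have := comp_uniq hB hk i; rewrite expg0 => /eqP.
    rewrite -order_dvdn ordE.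
    case: (leqP (n i) k) => hn.
      by rewrite (_ : n i - k = 0)%N ?expn0 ?dvd1n //; apply/eqP; rewrite subn_eq0.
    rewrite -{1}(subnK (ltnW hn)) expnD dvdn_pmul2r //; by rewrite expn_gt0 p0.
  exists (fun i => x i %/ p ^ (n i - k))%N.
  rewrite -xb (prodX_ab _ _ _ _ abG); last by move=> i _; apply: groupX.
  apply: eq_bigr => i _; rewrite gamE -!expgM.
  congr (_ ^+ _); rewrite -{1}(divnK (dv i)); lia.
have gamJ : forall i, gam i \in Gjk p j k G.
  move=> i; rewrite gamE; apply: imset_f; rewrite inE groupX //=.
  rewrite -expgM -order_dvdn ordE -expnD dvdn_exp2l //; lia.
have gS : group_set (Gjk p j k G).
  apply/group_setP; split.
    apply/imsetP; exists 1; last by rewrite expg1n.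
    by rewrite inE group1 expg1n eqxx.
  move=> u v /imsetP [a]; rewrite inE => /andP [aG' /eqP ak] ->.
  move=> /imsetP [b]; rewrite inE => /andP [bG' /eqP bk] ->.
  have cab : commute a b by apply: (centsP abG).
  rewrite -expgMn //; apply: imset_f; rewrite inE groupM //=.
  by rewrite expgMn // ak bk mulg1.
split.
  apply/eqP; rewrite eqEsubset; apply/andP; split.
    have -> : Gjk p j k G = (Group gS : {set gT}) by [].
    rewrite gen_subG; apply/subsetP => z /imsetP [i _ ->]; exact: gamJ.
  apply/subsetP => beta /ex [y ->]; apply: group_prod => i _.
  by apply: groupX; apply: mem_gen; apply: imset_f.
move=> beta /ex [y ->].
exists [ffun i => y i %% #[gam i]]; split.
  split=> [i|]; first by rewrite ffunE ltn_pmod // order_gt0.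
  by apply: eq_bigr => i _; rewrite ffunE expg_mod_order.
move=> x' [x'lt x'e].
have e : \prod_(i < r) alpha i ^+ ((qjk p j k alpha i * (y i %% #[gam i]))%N)
       = \prod_(i < r) alpha i ^+ ((qjk p j k alpha i * x' i)%N).
  rewrite (eq_bigr (fun i => gam i ^+ (y i %% #[gam i]))); last first.
    by move=> i _; rewrite expgM.
  rewrite (eq_bigr (fun i => gam i ^+ y i)); last by move=> i _; rewrite expg_mod_order.
  rewrite -x'e; apply: eq_bigr => i _; by rewrite expgM.
apply/ffunP => i; rewrite ffunE.
have := comp_uniq hB e i; rewrite !expgM -/(alphajk _ _ _ _ i) -/gam.
move/eqP; rewrite eq_expg_mod_order modn_mod (modn_small (x'lt i)).
by move/eqP.
Qed.
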